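(* Let $G$ be a non-complete double-critical $k$-chromatic graph. For any vertex $x$ of $G$ that is not adjacent to all the other vertices of $G$, $\chi(G_x)\le k-3$.
   Context: All graphs are finite and simple. A graph $G$ is (vertex-)critical if $\chi(G-v)<\chi(G)$ for every vertex $v\in V(G)$. A critical graph $G$ is double-critical if $\chi(G-x-y)\le\chi(G)-2$ for every edge $xy\in E(G)$. For a vertex $x$, $G_x:=G[N(x)]$ denotes the subgraph induced by the neighbourhood of $x$. *)

(* Defs.v *)
(* A finite simple graph is a symmetric irreflexive
   relation e on a finType T.  Subgraphs considered are induced subgraphs
   G[S] for S : {set T}. *)
From mathcomp Require Import all_boot.
Set Implicit Arguments. Unset Strict Implicit. Unset Printing Implicit Defensive.

(* G[S] admits a proper colouring with k colours (loops are ignored, which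
   is harmless since the graphs considered are irreflexive). *)
Definition colorable (T : finType) (e : rel T) (S : {set T}) (k : nat) : bool :=
  [exists f : {ffun T -> 'I_k},
     [forall x in S, forall y in S, ((x != y) && e x y) ==> (f x != f y)]].

Lemma colorable_exists (T : finType) (e : rel T) (S : {set T}) :
  exists k, colorable e S k.
Proof.
exists #|T|; apply/existsP; exists [ffun x => enum_rank x].
apply/forall_inP => x _; apply/forall_inP => y _; apply/implyP => /andP [nxy _].
rewrite !ffunE; apply: contra nxy => /eqP /enum_rank_inj ->; exact: eqxx.
Qed.

Definition chi (T : finType) (e : rel T) (S : {set T}) : nat :=
  ex_minn (colorable_exists e S).

Definition critical (T : finType) (e : rel T) : Prop :=
  forall v : T, chi e ([set: T] :\ v) < chi e [set: T].

(* G is double-critical: critical and chi(G - x - y) <= chi(G) - 2 for every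
   edge xy (stated without truncated subtraction). *)
Definition double_critical (T : finType) (e : rel T) : Prop :=
  critical e /\
  forall x y : T, e x y -> (chi e ([set: T] :\ x :\ y)).+2 <= chi e [set: T].

Definition complete (T : finType) (e : rel T) : Prop :=
  forall x y : T, x != y -> e x y.

(* vertex set of G_x = G[N(x)] *)
Definition nbhd (T : finType) (e : rel T) (x : T) : {set T} := [set y | e x y].

(* Main.v *)
Require Import Defs.
From mathcomp Require Import all_boot.
From mathcomp Require Import zify.
Set Implicit Arguments. Unset Strict Implicit. Unset Printing Implicit Defensive.

Lemma colP (T : finType) (e : rel T) (S : {set T}) n :
  reflect (exists f : T -> 'I_n, forall a b, a \in S -> b \in S -> a != b -> e a b -> f a != f b)
    (colorable e S n).
Proof.
apply: (iffP existsP).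
- case=> f /forall_inP H; exists f => a b aS bS nab eab.
  have /forall_inP /(_ b bS) /implyP := H a aS; apply; by rewrite nab.
- case=> f H; exists [ffun v => f v]; apply/forall_inP => a aS; apply/forall_inP => b bS.
  apply/implyP => /andP[nab eab]; rewrite !ffunE; exact: H.
Qed.

Lemma chi_col (T : finType) (e : rel T) (S : {set T}) : colorable e S (chi e S).
Proof. by rewrite /chi; case: ex_minnP. Qed.

Lemma chi_le (T : finType) (e : rel T) (S : {set T}) n : colorable e S n -> chi e S <= n.
Proof. rewrite /chi; case: ex_minnP => m _ H; exact: H. Qed.

Lemma nbhd_col (T : finType) (e : rel T) (e_irr : irreflexive e) (S : {set T}) x n :
  x \in S -> nbhd e x \subset S -> colorable e S n.+2 -> colorable e (nbhd e x) n.+1.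
Proof.
move=> xS sub /colP [c hc]; apply/colP.
pose g v : 'I_n.+1 := if c v < c x then inord (c v) else inord (c v).-1.
have nx : forall v, v \in nbhd e x -> (c v : nat) <> c x.
  move=> v vN; have vS : v \in S by apply: (subsetP sub).
  have hv : v != x by apply: contraTneq vN => ->; rewrite inE e_irr.
  have exv : e x v by move: vN; rewrite inE.
  have xv : x != v by rewrite eq_sym.
  have := hc x v xS vS xv exv.
  by move=> H /val_inj E; move: H; rewrite E eqxx.
have gv : forall v, v \in nbhd e x -> val (g v) = if c v < c x then (c v : nat) else (c v).-1.
  move=> v vN; have := nx v vN; have := ltn_ord (c v); have := ltn_ord (c x).
  rewrite /g; case: ifP => h A B C /=; rewrite inordK //; lia.
exists g => a b aN bN nab eab.
have ca := nx a aN; have cb := nx b bN.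
have hab : (c a : nat) <> c b.
  move=> /val_inj E; move: (hc a b (subsetP sub a aN) (subsetP sub b bN) nab eab).
  by rewrite E eqxx.
apply/eqP => /(congr1 val); rewrite !gv //.
case: ifP => h1; case: ifP => h2; lia.
Qed.

Lemma iso_false (T : finType) (e : rel T) (e_sym : symmetric e) :
  critical e -> forall v u : T, u != v -> (forall b, ~~ e v b) -> False.
Proof.
move=> hcrit v u uv hiso.
set S := [set: T] :\ v.
have uS : u \in S by rewrite !inE uv.
have /colP [c hc] := chi_col e S.
have : colorable e [set: T] (chi e S).
  apply/colP; exists (fun w => if w == v then c u else c w) => a b _ _ nab eab.
  case: (a =P v) => [ay|ay]; first by move: (hiso b); rewrite -ay eab.
  case: (b =P v) => [by'|by']; first by move: (hiso a); rewrite -by' e_sym eab.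
  apply: hc => //; rewrite !inE andbT; exact/eqP.
move/chi_le => H; have := hcrit v; rewrite -/S; lia.
Qed.

Theorem proposition13 (T : finType) (e : rel T)
  (e_sym : symmetric e) (e_irr : irreflexive e) (k : nat)
  (hk : chi e [set: T] = k)
  (hdc : double_critical e)
  (hnc : ~ complete e)
  (x : T) (hx : exists2 y : T, y != x & ~~ e x y) :
  chi e (nbhd e x) + 3 <= k.
Proof.
case: hdc => hcrit hdc2; case: hx => y nyx nexy.
have nyx' : x != y by rewrite eq_sym.
case: (pickP (fun w => e y w && ~~ e x w)) => [w /andP [eyw nexw] | hB].
- have hm := hdc2 y w eyw.
  have xw : x != w by apply: contraNneq nexy => ->; rewrite e_sym.
  have xS : x \in [set: T] :\ y :\ w by rewrite !inE xw nyx'.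
  have sub : nbhd e x \subset [set: T] :\ y :\ w.
    apply/subsetP => z; rewrite !inE => exz.
    rewrite andbT; apply/andP; split.
    + by apply: contraNneq nexw => <-.
    + by apply: contraNneq nexy => <-.
  have col := chi_col e ([set: T] :\ y :\ w).
  move: hm col; case E: (chi e ([set: T] :\ y :\ w)) => [|m] hm col.
  + by move/colP: col => [c _]; case: (c x).
  + move: E hm col; case: m => [|n] E hm col.
    * case: (pickP (e x)) => [z exz | hiso]; last first.
        by case: (iso_false e_sym hcrit nyx) => b; rewrite hiso.
      move/colP: col => [c hc].
      have zS : z \in [set: T] :\ y :\ w by apply: (subsetP sub); rewrite inE.
      have zx : z != x by apply: contraTneq exz => ->; rewrite e_irr.
      have := hc z x zS xS zx; rewrite e_sym exz => /(_ isT).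
      by case: (c z) => [[|]] //; case: (c x) => [[|]].
    * have := chi_le (nbhd_col e_irr xS sub col); lia.
- exfalso.
  case: (pickP (fun w => e y w)) => [w eyw | hiso].
  + have hm := hdc2 y w eyw.
    have xw : x != w by apply: contraNneq nexy => ->; rewrite e_sym.
    set S := [set: T] :\ y :\ w.
    have xS : x \in S by rewrite !inE xw nyx'.
    have /colP [c hc] := chi_col e S.
    set m := chi e S in c hc hm.
    have hexy : forall u, e y u -> e x u.
      by move=> u eyu; move: (hB u); rewrite eyu /=; case: (e x u).
    pose f v : 'I_m.+1 := if v == y then widen_ord (leqnSn m) (c x)
      else if v == w then ord_max else widen_ord (leqnSn m) (c v).
    have cneq : forall a b, a \in S -> b \in S -> a != b -> e a b -> (c a : nat) <> c b.
      move=> a b aS bS nab eab /val_inj E; move: (hc a b aS bS nab eab); by rewrite E eqxx.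
    have hoth : forall u, u != y -> u != w -> e y u -> (c u : nat) <> c x.
      move=> u uy uw eyu; have exu := hexy u eyu.
      have ux : u != x by apply: contraTneq exu => ->; rewrite e_irr.
      have uS : u \in S by rewrite !inE uy uw.
      by apply: cneq => //; rewrite e_sym.
    have : colorable e [set: T] m.+1.
      apply/colP; exists f => a b _ _ nab eab.
      have wy : w != y by apply: contraTneq eyw => ->; rewrite e_irr.
      have fy : f y = widen_ord (leqnSn m) (c x) by rewrite /f eqxx.
      have fw : f w = ord_max by rewrite /f (negbTE wy) eqxx.
      have fo : forall v, v != y -> v != w -> f v = widen_ord (leqnSn m) (c v).
        by move=> v h1 h2; rewrite /f (negbTE h1) (negbTE h2).
      have ltx := ltn_ord (c x).
      case: (a =P y) => [ay|/eqP ay].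
      * subst a; rewrite fy; case: (b =P w) => [->|/eqP bw].
          rewrite fw; apply/eqP => /(congr1 val) /=; lia.
        have by' : b != y by rewrite eq_sym.
        rewrite fo //; apply/eqP => /(congr1 val) /=.
        have := hoth b by' bw eab; lia.
      case: (a =P w) => [aw|/eqP aw].
      * subst a; rewrite fw; case: (b =P y) => [->|/eqP by'].
          rewrite fy; apply/eqP => /(congr1 val) /=; lia.
        have bw : b != w by rewrite eq_sym.
        rewrite fo //; apply/eqP => /(congr1 val) /=.
        have := ltn_ord (c b); lia.
      rewrite (fo a) //.
      case: (b =P y) => [by'|/eqP by'].
      * subst b; rewrite fy; apply/eqP => /(congr1 val) /=.
        have := hoth a ay aw; rewrite e_sym => /(_ eab); lia.
      case: (b =P w) => [bw|/eqP bw].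
      * subst b; rewrite fw; apply/eqP => /(congr1 val) /=.
        have := ltn_ord (c a); lia.
      rewrite fo //; apply/eqP => /(congr1 val) /=.
      have := cneq a b; rewrite !inE ay aw by' bw => /(_ isT isT nab eab); lia.
    move/chi_le; lia.
  + by apply: (iso_false e_sym hcrit nyx' ) => b; rewrite hiso.
Qed.
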